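(* Consider the averaged buck converter $-L\dot I=V-uV_s$, $C\dot V=I-GV$ with scalar constants $L>0$, $C>0$, $G\ge0$, $V_s\in\mathbb{R}$, extended by $\dot u=\upsilon$ (state $(I,V,\dot I,\dot V,u)$, input $\upsilon$). Then this system is passive with respect to the storage function $S=\tfrac12L\dot I^2+\tfrac12C\dot V^2$ and the port-variables $\dot u$ and $\dot IV_s$, i.e. $\dot S\le\dot u\,\dot IV_s$.
   Context: $I$ is the inductor current, $V$ the capacitor voltage, $u\in[0,1]$ the duty cycle (averaged model). *)

(* Defs.v *)
From Stdlib Require Import Reals Lra.
From Coquelicot Require Import Coquelicot.
Open Scope R_scope.

Definition storage (L C : R) (dI dV : R -> R) (t : R) : R :=
  / 2 * L * (dI t) ^ 2 + / 2 * C * (dV t) ^ 2.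

(* Main.v *)
Require Import Defs.
From Stdlib Require Import Reals Lra.
From Coquelicot Require Import Coquelicot.
Open Scope R_scope.

Theorem lemma2 (L C G Vs : R) (I V u dI dV du : R -> R) :
  0 < L -> 0 < C -> 0 <= G ->
  (forall t, is_derive I t (dI t)) ->
  (forall t, is_derive V t (dV t)) ->
  (forall t, is_derive u t (du t)) ->
  (forall t, - L * dI t = V t - u t * Vs) ->
  (forall t, C * dV t = I t - G * V t) ->
  forall t, ex_derive (storage L C dI dV) t /\
            Derive (storage L C dI dV) t <= du t * (dI t * Vs).
Proof.
  intros HL HC HG hI hV hu e1 e2 t.
  assert (HdI : forall t, is_derive dI t ((dV t - du t * Vs) * (- / L))).
  { intro s. apply is_derive_ext with (fun t => (V t - u t * Vs) * (- / L)).
    { intro x. rewrite <- e1. assert (H: forall y:R, - L * y * - / L = y) by (intro; field; lra). apply H. }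
    auto_derive.
    - repeat split; eexists; [apply hV|apply hu].
    - replace (Derive (fun x : R => V x) s) with (dV s) by (symmetry; apply is_derive_unique; apply hV).
      replace (Derive (fun x : R => u x) s) with (du s) by (symmetry; apply is_derive_unique; apply hu). ring. }
  assert (HdV : forall t, is_derive dV t ((dI t - G * dV t) * (/ C))).
  { intro s. apply is_derive_ext with (fun t => (I t - G * V t) * (/ C)).
    { intro x. rewrite <- e2. assert (H: forall y:R, C * y * / C = y) by (intro; field; lra). apply H. }
    auto_derive.
    - repeat split; eexists; [apply hI|apply hV].
    - replace (Derive (fun x : R => V x) s) with (dV s) by (symmetry; apply is_derive_unique; apply hV).
      replace (Derive (fun x : R => I x) s) with (dI s) by (symmetry; apply is_derive_unique; apply hI). ring. }
  assert (HS : is_derive (storage L C dI dV) t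
     (/2 * L * (2 * dI t * ((dV t - du t * Vs) * (- / L))) +
      /2 * C * (2 * dV t * ((dI t - G * dV t) * (/ C))))).
  { unfold storage. auto_derive.
    - repeat split; eexists; [apply HdI|apply HdV].
    - replace (Derive (fun x : R => dI x) t) with (((dV t - du t * Vs) * (- / L))) by (symmetry; apply is_derive_unique; apply HdI).
      replace (Derive (fun x : R => dV x) t) with (((dI t - G * dV t) * (/ C))) by (symmetry; apply is_derive_unique; apply HdV). simpl. ring. }
  split. { eexists; exact HS. }
  rewrite (is_derive_unique _ _ _ HS).
  replace (/ 2 * L * (2 * dI t * ((dV t - du t * Vs) * - / L)) +
    / 2 * C * (2 * dV t * ((dI t - G * dV t) * / C))) with
    (du t * (dI t * Vs) - G * (dV t * dV t)) by (field; lra).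
  assert (0 <= G * (dV t * dV t)) by (apply Rmult_le_pos; [lra| apply Rle_0_sqr]).
  lra.
Qed.
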